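(* Let $\omega=(\omega_1,\omega_2)\in\mathbb{R}^2$ be a frequency vector such that $\alpha:=\omega_1/\omega_2$ is irrational with (finite) Roth--Liouville irrationality measure $\mu(\alpha)$. Then $H^s_\omega\hookrightarrow Y^\sigma_\omega$ (continuous embedding) whenever $0\le\sigma<s-\mu(\alpha)+1$.
   Context: The Roth--Liouville irrationality measure $\mu(\alpha)$ is the supremum of all $\nu\ge1$ for which there exist infinitely many coprime pairs $(p,q)$, $q>0$, with $|\alpha-p/q|<q^{-\nu}$. On $\mathbb{T}^2=\mathbb{R}^2/\mathbb{Z}^2$ with Fourier coefficients $\hat u(n)$: $\langle\nabla\rangle^\sigma$ has symbol $\langle n\rangle^\sigma$, $\langle\partial_x\rangle$ has symbol $\langle\omega\cdot n\rangle$, $\partial_x^{-1}$ has symbol $\frac{1}{2\pi i\,\omega\cdot n}1_{n\ne0}$, where $\langle a\rangle=(1+|a|^2)^{1/2}$. $H^s_\omega$ is the usual Sobolev space $H^s(\mathbb{T}^2)$ (identified with quasi-periodic functions $x\mapsto g(x\omega)$), and $Y^\sigma_\omega$ is the closure of $C^\infty(\mathbb{T}^2)$ under $\|\langle\nabla\rangle^\sigma\langle\partial_x\rangle u\|_{L^2}+\|\langle\nabla\rangle^\sigma\partial_x^{-1}u\|_{L^2}$. *)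

(* Defs.v *)
From HB Require Import structures.
From mathcomp Require Import all_boot all_order all_algebra.
From mathcomp Require Import all_classical all_reals all_analysis.
From mathcomp Require Import complex.
Set Implicit Arguments. Unset Strict Implicit. Unset Printing Implicit Defensive.
Import Order.TTheory GRing.Theory Num.Theory.
Local Open Scope classical_set_scope.
Local Open Scope ring_scope.

Section Defs.
Variable R : realType.

Definition jbr (a : R) : R := Num.sqrt (1 + a ^+ 2).

Definition jbrZ2 (n : int * int) : R :=
  Num.sqrt (1 + (n.1%:~R) ^+ 2 + (n.2%:~R) ^+ 2).

Definition dotw (w1 w2 : R) (n : int * int) : R := w1 * n.1%:~R + w2 * n.2%:~R.

Definition good_exponent (a nu : R) : Prop :=
  1 <= nu /\
  ~ finite_set [set pq : int * int |
      [/\ coprimez pq.1 pq.2, (0 < pq.2)%R &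
          `|a - pq.1%:~R / pq.2%:~R| < (pq.2%:~R : R) `^ (- nu)]].

Definition irr_measure (a : R) : \bar R :=
  ereal_sup [set nu%:E | nu in good_exponent a].

(* A function on T^2 is represented by its Fourier coefficients
   c : Z^2 -> C (complex numbers R[i]); |c n| is Normc.normc (c n). *)

Definition Hs_norm (s : R) (c : int * int -> R[i]) : \bar R :=
  sqrte (\esum_(n in [set: int * int])
           ((jbrZ2 n `^ s * Normc.normc (c n)) ^+ 2)%:E).

(* ||u||_{Y^sigma} = ||<nabla>^sigma <d_x> u||_{L^2} + ||<nabla>^sigma d_x^{-1} u||_{L^2},
   with symbols <n>^sigma <omega.n> and <n>^sigma (2 pi i omega.n)^{-1} 1_{n<>0}. *)
Definition Y_norm (w1 w2 sigma : R) (c : int * int -> R[i]) : \bar R :=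
  sqrte (\esum_(n in [set: int * int])
           ((jbrZ2 n `^ sigma * jbr (dotw w1 w2 n) * Normc.normc (c n)) ^+ 2)%:E)
  + sqrte (\esum_(n in [set: int * int])
           ((if n == (0, 0) then 0
             else jbrZ2 n `^ sigma / (2 * pi * `|dotw w1 w2 n|) * Normc.normc (c n))
              ^+ 2)%:E).

Definition embeds (w1 w2 s sigma : R) : Prop :=
  exists C : R, 0 < C /\
    forall c : int * int -> R[i], (Y_norm w1 w2 sigma c <= C%:E * Hs_norm s c)%E.

End Defs.

(* Main.v *)
Require Import Defs.
From HB Require Import structures.
From mathcomp Require Import all_boot all_order all_algebra.
From mathcomp Require Import all_classical all_reals all_analysis.
From mathcomp Require Import complex.
From mathcomp Require Import finmap.
From mathcomp Require Import ring lra zify.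
Import Order.TTheory GRing.Theory Num.Theory.
Local Open Scope ring_scope.
Set Implicit Arguments. Unset Strict Implicit.

Lemma dirichlet (R : realType) (a : R) (m : nat) :
  exists x y : int, [/\ y != 0, `|y| <= (m.+1)%:R &
     `|a * y%:~R - x%:~R| < ((m.+1)%:R : R)^-1].
Proof.
pose N : R := (m.+1)%:R.
have N0 : 0 < N by rewrite ltr0n.
pose fr (k : nat) : R := a * k%:R - (Num.floor (a * k%:R))%:~R.
have fr0 : forall k, 0 <= fr k by move=> k; rewrite subr_ge0 floor_le.
have fr1 : forall k, fr k < 1.
  by move=> k; have := floorD1_gt (a * k%:R); rewrite /fr intrD /=; lra.
have trlt : forall k, (Num.truncn (N * fr k) < m.+1)%N.
  move=> k; rewrite truncn_lt_nat ?mulr_ge0 ?ler0n //.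
  by rewrite -/N -[X in _ < X]mulr1 ltr_pM2l.
pose box (k : 'I_m.+2) : 'I_m.+1 := inord (Num.truncn (N * fr k)).
have [i [j [e ne]]] : exists i j, box i = box j /\ i <> j.
  apply: contrapT => H.
  have inj : injective box.
    move=> i j e; apply: contrapT => ne; apply: H; by exists i, j.
  by have := @leq_card _ _ box inj; rewrite !card_ord ltnn.
have et : Num.truncn (N * fr i) = Num.truncn (N * fr j).
  by have := congr1 val e; rewrite /= !inordK.
have hi := truncn_itv (mulr_ge0 (ltW N0) (fr0 i)).
have hj := truncn_itv (mulr_ge0 (ltW N0) (fr0 j)).
rewrite et in hi.
move: hi hj; set t := Num.truncn _; rewrite -[t.+1]addn1 natrD => /andP[hi1 hi2] /andP[hj1 hj2].
exists (Num.floor (a * i%:R) - Num.floor (a * j%:R)), ((i : int) - (j : int)); split.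
- by rewrite subr_eq0; apply/eqP => -[] /val_inj.
- rewrite ler_norml; have := ltn_ord i; have := ltn_ord j; move: (nat_of_ord i) (nat_of_ord j) => i' j' h1 h2.
  by apply/andP; split; lia.
have -> : a * ((i : int) - (j : int))%:~R - (Num.floor (a * i%:R) - Num.floor (a * j%:R))%:~R
   = fr i - fr j by rewrite /fr !intrB -!pmulrn; ring.
have NV : N * N^-1 = 1 by rewrite mulfV // gt_eqF.
move: (N^-1) NV => u NV.
rewrite ltr_norml; apply/andP; split.
  have hd : N * (- u) < N * (fr i - fr j) by rewrite mulrN NV mulrBr; lra.
  by rewrite ltr_pM2l in hd.
have hd : N * (fr i - fr j) < N * u by rewrite NV mulrBr; lra.
by rewrite ltr_pM2l in hd.
Qed.
Lemma finite_lb (R : realType) (T : choiceType) (E : set T) (f : T -> R) :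
  finite_set E -> (forall x, E x -> 0 < f x) ->
  exists2 d : R, 0 < d & forall x, E x -> d <= f x.
Proof.
move=> finE fpos.
suff: forall l : seq T, (forall x, x \in l -> E x) ->
    exists2 d : R, 0 < d & forall x, x \in l -> d <= f x.
  move=> /(_ (finmap.enum_fset (fset_set E))) [x|d d0 hd].
    by move=> h; have : x \in fset_set E by []; rewrite in_fset_set // => /set_mem.
  exists d => // x Ex; apply: hd.
  by have : x \in fset_set E by rewrite in_fset_set //; apply/mem_set.
elim => [|a l IH] sub; first by exists 1.
have [d d0 hd] := IH (fun x h => sub x (@mem_behead _ (a :: l) x h)).
have fa : 0 < f a by apply: fpos; apply: sub; exact: mem_head.
exists (Num.min d (f a)); first by rewrite lt_min d0 fa.
move=> x; rewrite inE => /orP[/eqP->|xl]; first by rewrite ge_min lexx orbT.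
by rewrite ge_min hd.
Qed.

Lemma irr_nz (R : realType) (a : R) (p q : int) : irrational a -> 0 < q ->
  0 < `|a * q%:~R - p%:~R|.
Proof.
move=> ira q0; rewrite normr_gt0 subr_eq0; apply/negP => /eqP h.
apply: ira; apply/rationalP; exists p, `|q|%N.
have qE : q = (`|q|%N)%:Z by rewrite gtz0_abs.
have qn0 : (`|q|%N)%:R != 0 :> R by rewrite pnatr_eq0 -lt0n absz_gt0 gt_eqF.
by rewrite -h {1}qE pmulrn mulfK.
Qed.
Lemma reduce (R : realType) (a : R) (x y : int) : y != 0 ->
  exists p q g : int, [/\ coprimez p q, 0 < q, 0 < g, `|y| = g * q &
     `|a * y%:~R - x%:~R| = g%:~R * `|a * q%:~R - p%:~R| ].
Proof.
move=> y0.
set g := gcdz x y.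
have g0 : 0 < g by rewrite lt_def gcdz_eq0 (negbTE y0) andbF.
have hx := divzK (dvdz_gcdl x y). have hy := divzK (dvdz_gcdr x y).
rewrite -/g in hx hy.
set p0 := (x %/ g)%Z in hx *. set q0 := (y %/ g)%Z in hy *.
have cop : coprimez p0 q0.
  have e := mulz_gcdl p0 q0 g; rewrite hx hy -/g gtz0_abs // in e.
  have e1 : gcdz p0 q0 = 1.
    by apply: (mulIf (lt0r_neq0 g0)); rewrite /= mul1r.

  by rewrite /coprimez /coprime; move: e1; rewrite /gcdz => -[->].
have q0n0 : q0 != 0 by apply: contraNneq y0 => h; rewrite -hy h mul0r.
have key : forall z : R, a * y%:~R - x%:~R = g%:~R * (a * q0%:~R - p0%:~R).
  by move=> _; rewrite -hx -hy !intrM; ring.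
have gR : 0 <= g%:~R :> R by rewrite ler0z ltW.
case: (ltrgt0P q0) => hq; last by rewrite hq eqxx in q0n0.
- exists p0, q0, g; split => //; first by rewrite -hy normrM gtr0_norm // gtr0_norm // mulrC.
  by rewrite (key 0) normrM ger0_norm.
- exists (-p0), (-q0), g; split => //; first by rewrite coprimeNz coprimezN.
  + by rewrite oppr_gt0.
  + by rewrite -hy normrM ltr0_norm // gtr0_norm // mulrC.
  by rewrite (key 0) normrM ger0_norm // !intrN -normrN; congr (_ * `|_|); ring.
Qed.

Lemma good2 (R : realType) (a : R) : irrational a -> good_exponent a 2.
Proof.
move=> ira; split; first by rewrite ler1n.
move=> finS.
have [d d0 hd] := @finite_lb R _ _ (fun pq : int * int => `|a * pq.2%:~R - pq.1%:~R|) finS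
  (fun pq h => let: And3 _ q0 _ := h in irr_nz pq.1 ira q0).
pose m := Num.truncn (d^-1).
have md : ((m.+1)%:R : R)^-1 < d.
  have h := truncnS_gt (d^-1).
  by rewrite -[d]invrK ltf_pV2 ?posrE ?invr_gt0 ?ltr0n.
have [x [y [y0 yle ylt]]] := dirichlet a m.
have [p [q [g [cop q0 g0 yE eE]]]] := reduce a x y0.
pose Q : R := q%:~R; pose G : R := g%:~R; pose M : R := (m.+1)%:R.
pose e := `|a * Q - p%:~R|.
have Q0 : 0 < Q by rewrite ltr0z.
have G1 : 1 <= G by rewrite ler1z.
have M0 : 0 < M by rewrite ltr0n.
have e0 : 0 <= e by apply: normr_ge0.
have GQM : G * Q <= M.
  rewrite /G /Q -intrM -yE /M; move: yle; rewrite -(ler_int R) => h.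
  by apply: (le_trans h); rewrite rmorph_nat.
have Ge : G * e < M^-1 by rewrite -eE.
have eQ : e * Q < 1.
  have h1 : e * Q <= (G * e) * (G * Q).
    have -> : (G * e) * (G * Q) = (G * G) * (e * Q) by ring.
    by rewrite ler_peMl ?(mulr_ge0 e0 (ltW Q0)) // (mulr_ege1 G1 G1).
  apply: (le_lt_trans h1).
  have -> : 1 = M^-1 * M by rewrite mulVf ?gt_eqF.
  apply: (@lt_le_trans _ _ (M^-1 * (G * Q))).
    have GQ0 : 0 < G * Q by rewrite mulr_gt0 // (lt_le_trans ltr01 G1).
    by rewrite ltr_pM2r.
  by apply: ler_wpM2l => //; rewrite invr_ge0 ltW.
have inS : [/\ coprimez p q, 0 < q &
          `|a - p%:~R / q%:~R| < (q%:~R : R) `^ (- 2)].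
  split => //.
  rewrite powR_invn ?ltW // -/Q.
  have -> : a - p%:~R / Q = (a * Q - p%:~R) / Q by rewrite mulrBl mulfK ?gt_eqF.
  rewrite normrM normfV (gtr0_norm Q0) -/e expr2 invfM ltr_pM2r ?invr_gt0 //.
  by rewrite -div1r ltr_pdivlMr.
have := hd (p, q) inS; rewrite /= -/Q -/e => de.
have : G * e < d by apply: (lt_trans Ge).
rewrite ltNge => /negP; apply.
by apply: (le_trans de); rewrite -[X in X <= _]mul1r ler_wpM2r.
Qed.
Lemma dioph (R : realType) (a nu : R) : irrational a -> 1 <= nu ->
  finite_set [set pq : int * int | [/\ coprimez pq.1 pq.2, (0 < pq.2)%R &
          `|a - pq.1%:~R / pq.2%:~R| < (pq.2%:~R : R) `^ (- nu)]] ->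
  exists2 c : R, 0 < c & forall (n1 n2 : int) (J : R), (n1 != 0) || (n2 != 0) ->
     1 <= J -> `|n1%:~R| <= J ->
     c <= `|a * n1%:~R + n2%:~R| * J `^ (nu - 1).
Proof.
move=> ira nu1 finE.
have [d d0 hd] := @finite_lb R _ _ (fun pq : int * int => `|a * pq.2%:~R - pq.1%:~R|) finE
  (fun pq h => let: And3 _ q0 _ := h in irr_nz pq.1 ira q0).
exists (Num.min 1 d); first by rewrite lt_min ltr01 d0.
move=> n1 n2 J nz J1 nJ.
have nu0 : 0 <= nu - 1 by rewrite subr_ge0.
have J1p : 1 <= J `^ (nu - 1).
  by have := ler_powR J1 nu0; rewrite powRr0.
have [n1E|n10] := eqVneq n1 0.
  rewrite n1E eqxx /= in nz.
  rewrite n1E mulr0 add0r.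
  have h2 : 1 <= `|n2%:~R : R| by rewrite -intr_norm ler1z -gtz0_ge1 normr_gt0.
  rewrite ge_min; apply/orP; left.
  by apply: (le_trans _ (ler_pM ler01 ler01 h2 J1p)); rewrite mulr1.
have [p [q [g [cop q0 g0 nE eE]]]] := reduce a (- n2) n10.
rewrite intrN opprK in eE; rewrite eE.
pose Q : R := q%:~R; pose G : R := g%:~R.
rewrite -/Q -/G; set e := `|a * Q - p%:~R|.
have Q0 : 0 < Q by rewrite ltr0z.
have G1 : 1 <= G by rewrite ler1z.
have e0 : 0 <= e by apply: normr_ge0.
have QJ : Q <= J.
  have h : `|n1%:~R : R| = G * Q by rewrite -intr_norm nE intrM.
  apply: (le_trans _ nJ); rewrite h; exact: ler_peMl (ltW Q0) G1.
have JQ : Q `^ (nu - 1) <= J `^ (nu - 1).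
  by apply: ge0_ler_powR; rewrite ?nnegrE ?(ltW Q0) ?(le_trans ler01 J1).
have eG : e <= G * e by apply: ler_peMl.
case: (boolP (`|a - p%:~R / q%:~R| < (q%:~R : R) `^ (- nu))) => hin.
  have de := hd (p, q) (And3 cop q0 hin); rewrite /= -/Q -/e in de.
  rewrite ge_min; apply/orP; right; apply: (le_trans de).
  by apply: (le_trans _ (ler_pM e0 ler01 eG J1p)); rewrite mulr1.
have Qp0 : 0 < Q `^ (nu - 1) by apply: powR_gt0.
have QnuE : Q `^ nu = Q * Q `^ (nu - 1).
  rewrite -{2}(powRr1 (ltW Q0)) -powRD; first by congr (_ `^ _); ring.
  by apply/implyP => _; rewrite gt_eqF.
have hE : a - p%:~R / Q = (a * Q - p%:~R) / Q by rewrite mulrBl mulfK ?gt_eqF.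
rewrite hE normrM normfV (gtr0_norm Q0) -/e powRN QnuE in hin.
have QQp0 : 0 < Q * Q `^ (nu - 1) by apply: mulr_gt0.
have {}hin : (Q * Q `^ (nu - 1))^-1 <= e / Q by move: hin; rewrite ltNge negbK.
have {}hin := ler_wpM2r (ltW QQp0) hin.
rewrite mulVf ?gt_eqF // in hin.
have hE2 : e / Q * (Q * Q `^ (nu - 1)) = e * Q `^ (nu - 1).
  by field; rewrite gt_eqF.
rewrite hE2 in hin.
rewrite ge_min; apply/orP; left; apply: (le_trans hin).
by apply: ler_pM => //; apply: ltW.
Qed.

Local Open Scope classical_set_scope.
Lemma esum_scale (R : realType) (T : choiceType) (I : set T) (a : T -> \bar R) (k : R) :
  0 <= k -> (forall i, (0 <= a i)%E) ->
  (\esum_(i in I) (k%:E * a i) <= k%:E * \esum_(i in I) a i)%E.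
Proof.
move=> k0 a0; apply: ge_ereal_sup => _ [X [finX XI] <-].
rewrite fsbig_finite // -ge0_sume_distrr //; rewrite -fsbig_finite //.
apply: lee_wpmul2l; first by rewrite lee_fin.
by apply: ereal_sup_ubound; exists X.
Qed.

Lemma sq_bound (R : realType) (T : choiceType) (t h : T -> R) (A : R) :
  0 <= A -> (forall n, 0 <= t n) -> (forall n, t n <= A * h n) ->
  (sqrte (\esum_(n in [set: T]) ((t n) ^+ 2)%:E)
     <= A%:E * sqrte (\esum_(n in [set: T]) ((h n) ^+ 2)%:E))%E.
Proof.
move=> A0 t0 th.
have -> : A%:E = sqrte ((A ^+ 2)%:E) by rewrite /= sqrtr_sqr ger0_norm.
rewrite -sqrteM ?lee_fin ?sqr_ge0 //.
rewrite lee_sqrt; last first.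
  by apply: mule_ge0; [rewrite lee_fin sqr_ge0 | apply: esum_ge0 => n _; rewrite lee_fin sqr_ge0].
apply: le_trans (esum_scale _ _ _); last by move=> i; rewrite lee_fin sqr_ge0.
  2: by rewrite sqr_ge0.
apply: le_esum => n _; rewrite -EFinM lee_fin -exprMn !expr2.
by apply: ler_pM => //.
Qed.

Lemma jbrZ2_ge1 (R : realType) n : 1 <= jbrZ2 R n.
Proof.
rewrite /jbrZ2 -{1}sqrtr1 ler_sqrt; last by rewrite !addr_ge0 ?sqr_ge0.
have := sqr_ge0 (n.1%:~R : R); have := sqr_ge0 (n.2%:~R : R); lra.
Qed.

Lemma jbrZ2_n1 (R : realType) n : `|n.1%:~R| <= jbrZ2 R n.
Proof.
rewrite /jbrZ2 -sqrtr_sqr ler_sqrt; last by rewrite !addr_ge0 ?sqr_ge0.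
have := sqr_ge0 (n.2%:~R : R); lra.
Qed.

Lemma jbrZ2_n2 (R : realType) n : `|n.2%:~R| <= jbrZ2 R n.
Proof.
rewrite /jbrZ2 -sqrtr_sqr ler_sqrt; last by rewrite !addr_ge0 ?sqr_ge0.
have := sqr_ge0 (n.1%:~R : R); lra.
Qed.

Lemma jbr_le (R : realType) (x : R) : jbr x <= 1 + `|x|.
Proof.
rewrite /jbr -[X in _ <= X]ger0_norm ?addr_ge0 // -sqrtr_sqr ler_sqrt ?sqr_ge0 //.
have h := real_normK (num_real x).
have h0 : 0 <= `|x| by [].
have -> : (1 + `|x|) ^+ 2 = 1 + 2 * `|x| + `|x| ^+ 2 by ring.
rewrite h; lra.
Qed.

Lemma normc_ge0 (R : realType) (z : R[i]) : 0 <= Normc.normc z.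
Proof. by case: z => x y; apply: sqrtr_ge0. Qed.

Lemma bound1 (R : realType) (w1 w2 s sigma : R) (n : int * int) (N : R) :
  0 <= sigma -> sigma + 1 <= s -> 0 <= N ->
  jbrZ2 R n `^ sigma * jbr (dotw w1 w2 n) * N
    <= (1 + `|w1| + `|w2|) * (jbrZ2 R n `^ s * N).
Proof.
move=> sig0 sigs N0.
set J := jbrZ2 R n; set A := 1 + `|w1| + `|w2|.
have J1 : 1 <= J := jbrZ2_ge1 R n.
have J0 : 0 < J by apply: lt_le_trans J1.
have hj : jbr (dotw w1 w2 n) <= A * J.
  apply: (le_trans (jbr_le _)); rewrite /dotw.
  have h := ler_normD (w1 * n.1%:~R) (w2 * n.2%:~R); rewrite !normrM in h.
  have h1 : `|w1| * `|n.1%:~R| <= `|w1| * J by apply: ler_wpM2l => //; apply: jbrZ2_n1.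
  have h2 : `|w2| * `|n.2%:~R| <= `|w2| * J by apply: ler_wpM2l => //; apply: jbrZ2_n2.
  have -> : A * J = J + `|w1| * J + `|w2| * J by rewrite /A; ring.
  lra.
have hp : J `^ sigma * J <= J `^ s.
  rewrite -{2}(powRr1 (ltW J0)) -powRD; last by apply/implyP => _; rewrite gt_eqF.
  exact: ler_powR.
have Js0 : 0 <= J `^ sigma by apply: powR_ge0.
apply: (@le_trans _ _ (J `^ sigma * (A * J) * N)).
  by apply: ler_wpM2r => //; apply: ler_wpM2l.
have -> : J `^ sigma * (A * J) * N = A * ((J `^ sigma * J) * N) by ring.
have A0 : 0 <= A by rewrite /A; have := normr_ge0 w1; have := normr_ge0 w2; lra.
by apply: ler_wpM2l => //; apply: ler_wpM2r.
Qed.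

Lemma bound2 (R : realType) (w1 w2 s sigma nu c1 N : R) (n : int * int) :
  0 < c1 -> sigma + (nu - 1) <= s -> 0 <= N ->
  c1 <= `|dotw w1 w2 n| * jbrZ2 R n `^ (nu - 1) ->
  jbrZ2 R n `^ sigma / (2 * pi * `|dotw w1 w2 n|) * N
    <= (2 * pi * c1)^-1 * (jbrZ2 R n `^ s * N).
Proof.
move=> c10 hs N0 hc.
set J := jbrZ2 R n; set D := `|dotw w1 w2 n|; rewrite -/J -/D in hc.
have J1 : 1 <= J := jbrZ2_ge1 R n.
have J0 : 0 < J by apply: lt_le_trans J1.
set P := J `^ (nu - 1).
have P0 : 0 < P by apply: powR_gt0.
have D0 : 0 < D.
  have DP0 : 0 < D * P by apply: lt_le_trans hc.
  by rewrite -(pmulr_lgt0 _ P0).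
have pi0 : 0 < pi :> R := pi_gt0 R.
have hp : J `^ sigma * P <= J `^ s.
  rewrite /P -powRD; last by apply/implyP => _; rewrite gt_eqF.
  exact: ler_powR.
have hinv : (2 * pi * D)^-1 <= (2 * pi * c1)^-1 * P.
  have e : (2 * pi * D)^-1 = P * (2 * pi * (D * P))^-1.
    by rewrite [in RHS]mulrA [in RHS]invfM [in RHS]mulrCA mulfV ?gt_eqF // mulr1.
  rewrite e mulrC; apply: ler_wpM2r; first exact: ltW.
  rewrite lef_pV2 ?posrE ?mulr_gt0 //.
  by apply: ler_wpM2l => //; rewrite mulr_ge0 // ltW.
have Js0 : 0 <= J `^ sigma by apply: powR_ge0.
set B := (2 * pi * c1)^-1 in hinv *.
have B0 : 0 <= B by rewrite invr_ge0 !mulr_ge0 // ltW.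
rewrite mulrA; apply: ler_wpM2r => //.
rewrite mulrC; apply: (le_trans (ler_wpM2r Js0 hinv)).
rewrite -mulrA; apply: ler_wpM2l => //.
by rewrite mulrC.
Qed.

Unset Implicit Arguments.
Theorem lemma7p1 (R : realType) (w1 w2 : R) (s sigma mu : R) :
  w2 != 0 ->
  irrational (w1 / w2) ->
  irr_measure (w1 / w2) = mu%:E ->
  0 <= sigma -> sigma < s - mu + 1 ->
  embeds w1 w2 s sigma.
Proof.
move=> w20 ira imu sig0 sigs.
have mu2 : 2 <= mu.
  have : (2%:E <= irr_measure (w1 / w2))%E.
    by apply: ereal_sup_ubound; exists 2 => //; exact: good2.
  by rewrite imu lee_fin.
pose nu := (mu + (s + 1 - sigma)) / 2.
have munu : mu < nu by rewrite /nu; lra.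
have nus : sigma + (nu - 1) <= s by rewrite /nu; lra.
have nu1 : 1 <= nu by lra.
have finE : finite_set [set pq : int * int | [/\ coprimez pq.1 pq.2, (0 < pq.2)%R &
          `|w1 / w2 - pq.1%:~R / pq.2%:~R| < (pq.2%:~R : R) `^ (- nu)]].
  apply: contrapT => nf.
  have : (nu%:E <= irr_measure (w1 / w2))%E.
    by apply: ereal_sup_ubound; exists nu => //; split.
  by rewrite imu lee_fin leNgt munu.
have [c0 c00 hc] := dioph ira nu1 finE.
pose A := 1 + `|w1| + `|w2|.
pose c1 := `|w2| * c0.
have c10 : 0 < c1 by rewrite mulr_gt0 // normr_gt0.
pose B := (2 * pi * c1)^-1.
have A0 : 0 < A by rewrite /A; have := normr_ge0 w1; have := normr_ge0 w2; lra.
have pi0 : 0 < pi :> R := pi_gt0 R.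
have two0 : 0 < 2 :> R by [].
have pi20 : 0 < 2 * pi :> R by rewrite mulr_gt0.
have B0 : 0 < B by rewrite /B invr_gt0 mulr_gt0.
exists (A + B); split; first by rewrite addr_gt0.
move=> c.
rewrite /Y_norm /Hs_norm EFinD ge0_muleDl ?lee_fin ?(ltW A0) ?(ltW B0) //.
apply: leeD.
- apply: (sq_bound (ltW A0)).
  + move=> n; rewrite !mulr_ge0 ?powR_ge0 ?normc_ge0 //; exact: sqrtr_ge0.
  + move=> n; apply: bound1 => //; last exact: normc_ge0.
    lra.
- apply: (sq_bound (ltW B0)).
  + move=> n; case: ifP => _ //.
    by rewrite mulr_ge0 ?normc_ge0 // mulr_ge0 ?powR_ge0 // invr_ge0 mulr_ge0 // ltW.
  + move=> [n1 n2]; case: ifP => nz.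
      by rewrite mulr_ge0 ?(ltW B0) // mulr_ge0 ?powR_ge0 ?normc_ge0.
    apply: (bound2 c10 nus (normc_ge0 _)).
    have nz' : (n1 != 0) || (n2 != 0) by move: nz; rewrite xpair_eqE => /negbT; rewrite negb_and.
    have := hc n1 n2 (jbrZ2 R (n1, n2)) nz' (jbrZ2_ge1 R _) (jbrZ2_n1 R (n1, n2)).
    have -> : dotw w1 w2 (n1, n2) = w2 * (w1 / w2 * n1%:~R + n2%:~R).
      by rewrite /dotw /=; field.
    rewrite normrM /c1 => h; rewrite -[ `|w2| * _ * _ ]mulrA; by apply: ler_wpM2l.
Qed.
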